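(* Let $\mu>0$, $q\in[0,1]$, $s>0$ be fixed and for each $N$ consider the Moran model $(P,X)$ with $N$ individuals described in the context. For each $N$ let $A^{(N)}\subset\bar S^{(N)}$, and let $B^{(N)}$ be an event in $\mathscr{F}_1$ such that $\mathbb{P}^p(B^{(N)})\le\varepsilon(N)$ for all $p\in A^{(N)}$, where $\varepsilon(N)\to0$ as $N\to\infty$. Then there is a constant $C_\mu$ depending only on $\mu$ such that, if $N$ is sufficiently large, for every $p\in A^{(N)}$, \[ \mathbb{E}^p\Big[\inf_{t\in[0,1]}\min_{i=1,\dots,N}\big(X_i(t)-X_i(0)\big)\mathbf{1}_{B^{(N)}}\Big]\ge -C_\mu\big(\sqrt{c_2(p)N^3}+N^2\big)\varepsilon(N)^{1/2}. \] In particular, if $N$ is sufficiently large, for every $p\in A^{(N)}$, \[ \mathbb{E}^p\Big[\inf_{t\in[0,1]}\big(k_c(P(t))-k_c(p)\big)\mathbf{1}_{B^{(N)}}\Big]\ge -C_\mu\big(\sqrt{c_2(p)N^3}+N^2\big)\varepsilon(N)^{1/2}. \] Both statements remain true if $(P,X)$ is replaced by the neutral process $(P^{(Y)},Y)$.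
   Context: Moran model with $N$ individuals. Individual $i$ has fitness type $X_i(t)$. $\bar S^{(N)}$ is the set of probability measures on $\mathbb{R}$ consisting of $N$ point masses of weight $1/N$ all located on a common set $l+\mathbb{Z}$ with $l\in\frac1N\mathbb{Z}$. Dynamics: (Mutation) each individual independently at rate $q\mu$ has its type increased by $1$ and at rate $(1-q)\mu$ decreased by $1$. (Selection) for each ordered pair $(i,j)$, at rate $\frac{s}{N}(X_i-X_j)^+$ individual $i$ replaces individual $j$ ($X_j$ set equal to $X_i$). (Resampling) for each ordered pair $(i,j)$, at rate $\frac1N$ individual $i$ replaces individual $j$. The process is driven by independent Poisson processes/random measures for these events; $\mathscr{F}_1$ is the $\sigma$-algebra generated by the driving noise (equivalently the process) up to time $1$. $P(t)=\frac1N\sum_i\delta_{X_i(t)}$; $\mathbb{P}^p,\mathbb{E}^p$ refer to the process started from a configuration with empirical measure $p$. For $p\in\bar S^{(N)}$: $p_k=p(\{k\})$, $p_{[k,\infty)}=\sum_{j\ge k}p_j$, $m(p)=\sum_k kp_k$, $c_2(p)=\sum_k(k-m(p))^2p_k$, and $k_c(p)=\max\{k:\ Np_{[k,\infty)}>\log^2N\}$. The neutral process $(P^{(Y)},Y)$ is defined by the same mutation and resampling mechanisms (same driving noise) but with no selection; $P^{(Y)}$ is its empirical measure. *)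

(* Defs.v *)
From HB Require Import structures.
From mathcomp Require Import all_boot all_order all_algebra.
From mathcomp Require Import all_classical all_reals all_analysis.
Set Implicit Arguments. Unset Strict Implicit. Unset Printing Implicit Defensive.
Import Order.TTheory GRing.Theory Num.Theory.
Local Open Scope classical_set_scope.
Local Open Scope ring_scope.

(* Every noise source is a standard Poisson random measure on
   [0,oo) x [0,oo) with intensity dt du (Lebesgue); events are obtained by
   thinning:  a point (t,u) of
   - NUp i    is an up-mutation of i at time t      iff u <= q mu,
   - NDown i  is a down-mutation of i at time t     iff u <= (1-q) mu,
   - NRes i j is a resampling event (i replaces j)  iff u <= 1/N,
   - NSel i j is a selection event (i replaces j)   iff u <= s/N (X_i - X_j)^+
     (X evaluated just before t). *)
Inductive noise (N : nat) :=
| NUp of 'I_N | NDown of 'I_N | NRes of 'I_N & 'I_N | NSel of 'I_N & 'I_N.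

Section Defs.
Variable R : realType.

Definition rect (a b c e : R) : set (R * R) :=
  [set z | a <= z.1 < b /\ c <= z.2 < e].

Definition poisson_pmf (lam : R) (n : nat) : R :=
  expR (- lam) * lam ^+ n / (n`!)%:R.

Definition count_in (S A : set (R * R)) : \bar R := counting (S `&` A).

Definition rect_of (r : R * R * R * R) : set (R * R) :=
  rect r.1.1.1 r.1.1.2 r.1.2 r.2.

Definition good_rect (r : R * R * R * R) : Prop :=
  0 <= r.1.1.1 <= r.1.1.2 /\ 0 <= r.1.2 <= r.2.

Definition area (r : R * R * R * R) : R := (r.1.1.2 - r.1.1.1) * (r.2 - r.1.2).

Definition count_event (d : measure_display) (Om : measurableType d)
    (S : Om -> set (R * R)) (r : R * R * R * R) (c : nat) : set Om :=
  [set w | count_in (S w) (rect_of r) = (c%:R)%:E].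

(* M is a family of independent standard Poisson random measures on the
   quadrant [0,oo)x[0,oo) with Lebesgue intensity dt du: every point lies in
   the quadrant, the count events are measurable, and the joint law of the
   counts on finitely many rectangles (pairwise disjoint when they concern the
   same source) is the product of Poisson laws with parameter the area. *)
Definition indep_std_poisson (d : measure_display) (Om : measurableType d)
    (P : probability Om R) (I : Type) (M : I -> Om -> set (R * R)) : Prop :=
  [/\ (forall k w, M k w `<=` [set z | 0 <= z.1 /\ 0 <= z.2]),
      (forall k r c, good_rect r -> measurable (count_event (M k) r c)) &
      forall (n : nat) (k : 'I_n -> I) (r : 'I_n -> R * R * R * R)
             (c : 'I_n -> nat),
        (forall m, good_rect (r m)) ->
        (forall m1 m2, m1 <> m2 -> k m1 = k m2 ->
           rect_of (r m1) `&` rect_of (r m2) = set0) ->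
        P (\bigcap_(m in [set: 'I_n]) count_event (M (k m)) (r m) (c m))
        = (\prod_(m < n) poisson_pmf (area (r m)) (c m))%:E].

Definition F1 (d : measure_display) (Om : measurableType d) (I : Type)
    (M : I -> Om -> set (R * R)) : set (set Om) :=
  <<s [set E | exists k r c, good_rect r /\ r.1.1.2 <= 1 /\
                E = count_event (M k) r c] >>.

(* Configurations (X_1..X_N) whose empirical measure lies in S^(N):
   all types lie on a common set l + Z with l in (1/N) Z. *)
Definition config_ok (N : nat) (x : 'I_N -> R) : Prop :=
  exists l : R, (exists z : int, N%:R * l = z%:~R) /\
                forall i, exists z : int, x i = l + z%:~R.

(* empirical measure p = 1/N sum_i delta_{x_i}, as a mass function k |-> p_k *)
Definition emp (N : nat) (x : 'I_N -> R) : R -> R :=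
  fun k => #|[set i | x i == k]|%:R / N%:R.

Definition mean_cfg (N : nat) (x : 'I_N -> R) : R :=
  (\sum_(i < N) x i) / N%:R.
Definition c2_cfg (N : nat) (x : 'I_N -> R) : R :=
  (\sum_(i < N) (x i - mean_cfg x) ^+ 2) / N%:R.

Definition kc_cfg (N : nat) (x : 'I_N -> R) : R :=
  sup [set k : R | (exists i (z : int), k = x i + z%:~R) /\
                   (ln (N%:R : R)) ^+ 2 < #|[set i | k <= x i]|%:R].

Definition replacer (N : nat) (sv : R) (M : noise N -> set (R * R))
    (y : 'I_N -> R) (t : R) (i : 'I_N) : option 'I_N :=
  [pick j | `[< (exists u, M (NRes j i) (t, u) /\ u <= N%:R^-1) \/
               (exists u, M (NSel j i) (t, u) /\
                          u <= sv / N%:R * Num.max 0 (y j - y i)) >] ].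

Definition step (N : nat) (mu q sv : R) (M : noise N -> set (R * R))
    (y : 'I_N -> R) (t : R) : 'I_N -> R :=
  fun i =>
    (if replacer sv M y t i is Some j then y j else y i)
    + (if `[< exists u, M (NUp i) (t, u) /\ u <= q * mu >] then 1 else 0)
    - (if `[< exists u, M (NDown i) (t, u) /\ u <= (1 - q) * mu >] then 1 else 0).

(* X : [0,oo) -> R^N is the (cadlag, piecewise constant) path of the Moran
   model with mutation (mu,q), selection sv and resampling, driven by M and
   started from x: X 0 = x, X is right-constant, and at every t > 0 it has a
   constant left value y with X t = step y t. *)
Definition moran_path (N : nat) (mu q sv : R) (M : noise N -> set (R * R))
    (x : 'I_N -> R) (X : R -> 'I_N -> R) : Prop :=
  [/\ X 0 = x,
      (forall t, 0 <= t -> exists2 del, 0 < del &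
          forall r, t <= r < t + del -> X r = X t) &
      (forall t, 0 < t -> exists2 del, 0 < del & exists y,
          (forall r, t - del < r < t -> X r = y) /\ X t = step mu q sv M y t)].

Definition min_disp (N : nat) (X : R -> 'I_N -> R) : R :=
  inf [set inf [set X t i - X 0 i | i in [set: 'I_N]] | t in [set t | 0 <= t <= 1]].

Definition min_kc (N : nat) (X : R -> 'I_N -> R) : R :=
  inf [set kc_cfg (X t) - kc_cfg (X 0) | t in [set t | 0 <= t <= 1]].

End Defs.

(* Main.v *)
Require Import Defs.
From HB Require Import structures.
From mathcomp Require Import all_boot all_order all_algebra finmap.
From mathcomp Require Import all_classical all_reals all_analysis.
From mathcomp Require Import measurable_realfun.
From mathcomp Require Import ring lra zify.
From Stdlib Require Import Lia.
Import Order.TTheory GRing.Theory Num.Theory.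
Import HBNNSimple.
Set Implicit Arguments. Unset Strict Implicit.
Local Open Scope classical_set_scope.
Local Open Scope ring_scope.

Lemma le_int_nm d (T : measurableType d) (R : realType)
  (mu : {measure set T -> \bar R}) (f g : T -> \bar R) :
  (forall x, (0 <= f x)%E) -> (forall x, (0 <= g x)%E) ->
  measurable_fun [set: T] g -> {ae mu, forall x, (f x <= g x)%E} ->
  (\int[mu]_x f x <= \int[mu]_x g x)%E.
Proof.
move=> f0 g0 mg fg; rewrite (ge0_integralTE mu f0) /=.
apply: ge_ereal_sup => _ [h hf <-].
rewrite -integralT_nnsfun.
apply: ae_ge0_le_integral => //.
- by move=> x _; rewrite lee_fin; exact: fun_ge0.
- by apply/(measurable_EFinP setT h); exact: measurable_funPT.
- apply: filterS fg => x fgx _; exact: le_trans (hf x) fgx.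
Qed.

Section Path.
Variable R : realType.

Definition cnt (L : seq (R * R)) (t : R) : nat := count (fun z : R * R => z.1 <= t) L.

Lemma cnt_split (L : seq (R * R)) r t : r <= t ->
  cnt L t = addn (cnt L r) (count (fun z : R * R => r < z.1 <= t) L).
Proof.
move=> rt; elim: L => //= z L IH; rewrite IH.
have [zr|rz] := leP z.1 r.
  by rewrite (le_trans zr rt) /=; lia.
have [zt|tz] := leP z.1 t; rewrite /=; lia.
Qed.

Lemma cnt_le (L : seq (R * R)) r t : r <= t -> (cnt L r <= cnt L t)%N.
Proof. by move=> rt; rewrite (cnt_split _ rt) leq_addr. Qed.

Lemma cnt_lt (L : seq (R * R)) r t u : r < t -> (t, u) \in L ->
  (cnt L r < cnt L t)%N.
Proof.
move=> rt tL; rewrite (cnt_split _ (ltW rt)) -addn1 leq_add2l.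
rewrite -has_count; apply/hasP; exists (t, u) => //=.
by rewrite rt lexx.
Qed.

Definition Fn N (L : 'I_N -> seq (R * R)) t : nat := (\sum_(i < N) cnt (L i) t)%N.

Lemma Fn_le N (L : 'I_N -> seq (R * R)) r t : r <= t -> (Fn L r <= Fn L t)%N.
Proof. by move=> rt; apply: leq_sum => i _; apply: cnt_le. Qed.

Lemma Fn_lt N (L : 'I_N -> seq (R * R)) r t u i : r < t -> (t, u) \in L i ->
  (Fn L r < Fn L t)%N.
Proof.
move=> rt tL; rewrite /Fn (bigD1 i) //= [X in (_ < X)%N](bigD1 i) //=.
rewrite -addSn leq_add //; first exact: cnt_lt tL.
by apply: leq_sum => j _; apply: cnt_le; apply: ltW.
Qed.

Lemma step_lb N (mu q sv : R) (M : noise N -> set (R * R)) (y : 'I_N -> R) t i m :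
  (forall j, m <= y j) ->
  m - (if `[< exists u, M (NDown i) (t, u) /\ u <= (1 - q) * mu >] then 1 else 0)
  <= step mu q sv M y t i.
Proof.
move=> ym; rewrite /step.
have hA : m <= (if replacer sv M y t i is Some j then y j else y i).
  by case: (replacer sv M y t i).
move: hA; case: (replacer sv M y t i) => [j|] hA; case: ifP => _; case: ifP => _; lra.
Qed.

Lemma path_lb N (mu q sv : R) (M : noise N -> set (R * R)) x X
  (L : 'I_N -> seq (R * R)) m0 :
  moran_path mu q sv M x X -> (forall i, m0 <= x i) ->
  (forall i t u, 0 < t <= 1 -> M (NDown i) (t, u) -> u <= (1 - q) * mu ->
     (t, u) \in L i) ->
  forall t, 0 <= t <= 1 -> forall i, m0 - (Fn L t)%:R <= X t i.
Proof.
move=> [X0 Xr Xl] xm Lin t t01 i; rewrite leNgt; apply/negP => Hbad.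
pose Bad := [set s : R | (0 <= s <= 1) /\ exists j, X s j < m0 - (Fn L s)%:R].
have Bt : Bad t by split => //; exists i.
have Bne : Bad !=set0 by exists t.
have Blb : lbound Bad 0 by move=> s [/andP[]].
have Bhi : has_inf Bad by split => //; exists 0.
pose tau := inf Bad.
have hinf s : Bad s -> tau <= s by move=> Bs; exact: (ge_inf Bhi.2).
have tau0 : 0 <= tau by exact: lb_le_inf.
have tau1 : tau <= 1 by apply: le_trans (hinf _ Bt) _; case/andP: t01.
have Btau : Bad tau.
  apply/not_notP => nb.
  have [del del0 Hdel] := Xr tau tau0.
  have [s Bs slt] := inf_adherent del0 Bhi.
  have ts := hinf s Bs.
  case: (Bs) => _ [j Hj].
  have Xst : X s = X tau by apply: Hdel; rewrite ts.
  have : m0 - (Fn L tau)%:R <= X tau j.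
    rewrite leNgt; apply/negP => H; apply: nb; split; first by rewrite tau0.
    by exists j.
  have := Fn_le L ts; rewrite -(ler_nat R) => HF.
  rewrite -Xst; lra.
have tau_pos : 0 < tau.
  rewrite lt_neqAle tau0 andbT; apply/eqP => t0.
  case: Btau => _ [j]; rewrite -t0 X0.
  have := xm j; have : 0 <= (Fn L 0)%:R :> R by [].
  lra.
have [del del0 [y [Hy Xtau]]] := Xl tau tau_pos.
pose r := Num.max (tau - del / 2) (tau / 2).
have rlt : r < tau by rewrite /r gt_max; apply/andP; split; lra.
have rgt : tau - del < r by rewrite /r lt_max; apply/orP; left; lra.
have r0 : 0 <= r by rewrite /r le_max; apply/orP; right; lra.
have Xry : X r = y by apply: Hy; rewrite rlt rgt.
have yb : forall j, m0 - (Fn L r)%:R <= y j.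
  move=> j; rewrite -Xry leNgt; apply/negP => H.
  have : tau <= r by apply: hinf; split; [rewrite r0 /=; lra | exists j].
  lra.
case: Btau => _ [j Hj].
have := step_lb mu q sv M tau j yb; rewrite -Xtau.
case: asboolP => [[u [Mu uq]]|_].
  have tL : (tau, u) \in L j by apply: Lin => //; rewrite tau_pos.
  have := Fn_lt rlt tL; rewrite -(ler_nat R) -natr1 => HF.
  lra.
have := Fn_le L (ltW rlt); rewrite -(ler_nat R) => HF.
lra.
Qed.

End Path.

Lemma exp_series (R : realType) (x : R) : 0 <= x ->
  (\sum_(0 <= n <oo) ((x ^+ n / n`!%:R)%:E) = (expR x)%:E)%E.
Proof.
move=> x0; rewrite expRE -EFin_lim; last first.
  rewrite /pseries; under eq_fun do rewrite mulrC.
  exact: is_cvg_series_exp_coeff.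
apply/congr_lim/funext => n /=; rewrite /pseries /series /= -sumEFin.
by apply: eq_bigr => i _; rewrite mulrC.
Qed.

Lemma pmf_series (R : realType) (l : R) : 0 <= l ->
  (\sum_(0 <= n <oo) ((Defs.poisson_pmf l n)%:E) = 1)%E.
Proof.
move=> l0.
under eq_eseriesr do rewrite /Defs.poisson_pmf -mulrA EFinM.
rewrite nneseriesZl; last first.
  by move=> i _; rewrite lee_fin divr_ge0 // exprn_ge0.
rewrite exp_series // -EFinM expRN mulVf //.
by rewrite gt_eqF // expR_gt0.
Qed.


Section PP.
Variables (R : realType) (d : measure_display) (Om : measurableType d)
  (P : probability Om R) (I : Type) (M : I -> Om -> set (R * R)).
Hypothesis hM : indep_std_poisson P M.

Lemma cev_prob k r c : good_rect r ->
  P (count_event (M k) r c) = (Defs.poisson_pmf (area r) c)%:E.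
Proof.
case: hM => _ _ h3 gr.
have H : forall m1 m2 : 'I_1, m1 <> m2 -> (fun=> k) m1 = (fun=> k) m2 ->
    rect_of ((fun=> r) m1) `&` rect_of ((fun=> r) m2) = set0.
  by move=> m1 m2; rewrite [m1]ord1 [m2]ord1.
have := h3 1%N (fun=> k) (fun=> r) (fun=> c) (fun=> gr) H.
rewrite big_ord1 => <-; congr (P _).
by apply/seteqP; split => w /=; [move=> h m _ | move=> /(_ ord0 Logic.I)].
Qed.

Lemma fin_ae k r : good_rect r ->
  {ae P, forall w, exists c : nat, count_in (M k w) (rect_of r) = (c%:R)%:E}.
Proof.
move=> gr; case: hM => _ h2 _.
pose U := \bigcup_c count_event (M k) r c.
have mU : measurable U by apply: bigcupT_measurable => c; apply: h2.
exists (~` U); split.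
- exact: measurableC.
- rewrite probability_setC // measure_bigcup; last 2 first.
  + by move=> i _; apply: h2.
  + move=> i j _ _ [w [hi hj]]; move: hi hj; rewrite /count_event /= => hi hj.
    have : (i%:R : R) = j%:R by apply: EFin_inj; rewrite -hi -hj.
    by move/eqP; rewrite eqr_nat => /eqP.
  rewrite (@eq_eseriesr _ _ (fun i => (Defs.poisson_pmf (area r) i)%:E)); last by move=> i _; exact: cev_prob.
  rewrite (_ : (\sum_(0 <= i <oo | i \in [set: nat]) _)%E = 1%E) ?subee //.
  rewrite -(pmf_series (R:=R) (l:=area r)); last first.
    by case: gr => /andP[? ?] /andP[? ?]; rewrite /area mulr_ge0 // subr_ge0.
  apply: congr_lim; apply/funext => n; apply: eq_bigl => i.
  by rewrite in_setT.
- move=> w /= nw [c _ hc]; apply: nw; exists c; exact: hc.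
Qed.

End PP.

Section IB.
Variables (R : realType) (d : measure_display) (Om : measurableType d)
  (P : probability Om R) (N : nat) (M : noise N -> Om -> set (R * R)).
Hypothesis hM : indep_std_poisson P M.
Variable r0 : R * R * R * R.
Hypothesis gr0 : good_rect r0.
Variable K : R.
Hypothesis hK : (\sum_(0 <= n <oo) (((n ^ 2)%:R * Defs.poisson_pmf (area r0) n)%:E)
     <= K%:E)%E.

Let E i c := count_event (M (NDown i)) r0 c.

Lemma mE i c : measurable (E i c).
Proof. by case: hM => _ h2 _; apply: h2. Qed.

Lemma int_bound (Phi : Om -> R) (S : R) (B : set Om) (eps : R) :
  0 <= S -> measurable B -> (P B <= eps%:E)%E ->
  {ae P, forall w, exists cs : 'I_N -> nat,
     (forall i, count_in (M (NDown i) w) (rect_of r0) = ((cs i)%:R)%:E) /\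
     - (2 * S + \sum_(i < N) (cs i)%:R) <= Phi w} ->
  ((- (2 * S * eps + N%:R * (1 + K) / 2 * Num.sqrt eps))%:E
    <= \int[P]_w ((Phi w * \1_B w)%:E))%E.
Proof.
move=> S0 mB PB hPhi.
have eps0 : 0 <= eps by rewrite -lee_fin; apply: le_trans PB; exact: measure_ge0.
have K0 : 0 <= K.
  rewrite -lee_fin; apply: le_trans hK; apply: nneseries_ge0 => n _ _.
  rewrite lee_fin mulr_ge0 //.
  by rewrite /Defs.poisson_pmf !mulr_ge0 ?expR_ge0 ?exprn_ge0 ?invr_ge0 //;
    case: gr0 => /andP[? ?] /andP[? ?]; rewrite /area mulr_ge0 // subr_ge0.
rewrite integralE.
set fp := (\int[P]_(x in _) _ ^\+ x)%E.
set fm := (\int[P]_(x in _) _ ^\- x)%E.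
have fp0 : (0 <= fp)%E by apply: integral_ge0 => w _; exact: funepos_ge0.
suff hm : (fm <= (2 * S * eps + N%:R * (1 + K) / 2 * Num.sqrt eps)%:E)%E.
  rewrite EFinN; apply: le_trans (_ : - fm <= _)%E; first by rewrite leeN2.
  exact: leeDr.
have [e0|en0] := eqVneq eps 0.
  have PB0 : P B = 0%E.
    by apply/eqP; rewrite eq_le measure_ge0 andbT; move: PB; rewrite e0.
  rewrite e0 sqrtr0 !mulr0 addr0.
  apply: (@le_trans _ _ (\int[P]_w (cst 0%E w))%E); last by rewrite integral0.
  apply: le_int_nm.
  - by move=> w; exact: funeneg_ge0.
  - by [].
  - exact: measurable_cst.
  - exists B; split => //; move=> w /= hw; apply: contrapT => Bw; apply: hw.
    by rewrite funenegE indicE memNset // mulr0 oppe0 maxxx.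
have ep : 0 < eps by rewrite lt_neqAle eq_sym en0 eps0.
set t := Num.sqrt eps.
have t0 : 0 < t by rewrite sqrtr_gt0.
have tt : t * t = eps by rewrite -expr2 sqr_sqrtr.
pose a := 2 * S + N%:R / (2 * t).
have a0 : 0 <= a.
  have : 0 <= N%:R / (2 * t) by rewrite divr_ge0 // mulr_ge0 // ltW.
  rewrite /a; lra.
pose u i c w := (((c ^ 2)%:R * \1_(E i c) w)%:E : \bar R).
have u0 i c w : (0 <= u i c w)%E by rewrite lee_fin mulr_ge0.
have mu_ i c : measurable_fun setT (u i c).
  apply/(measurable_EFinP setT (fun w => (c ^ 2)%:R * \1_(E i c) w)).
  by apply: measurable_funM => //; apply: measurable_indic; exact: mE.
pose sr i w := (\sum_(0 <= c <oo) u i c w)%E.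
have sr0 i w : (0 <= sr i w)%E by apply: nneseries_ge0 => n _ _.
have msr i : measurable_fun setT (sr i).
  have -> : sr i = fun w => (\sum_(0 <= c <oo | c \in [set: nat]) u i c w)%E.
    apply/funext => w; apply: congr_lim; apply/funext => n; apply: eq_bigl => j.
    by rewrite in_setT.
  by apply: ge0_emeasurable_sum => // k x _ _.
pose H w := ((a * \1_B w)%:E + \sum_(i < N) ((t / 2)%:E * sr i w))%E.
have H0 w : (0 <= H w)%E.
  rewrite adde_ge0 //; first by rewrite lee_fin mulr_ge0.
  by apply: sume_ge0 => i _; rewrite mule_ge0 // lee_fin divr_ge0 // ltW.
have mH1 : measurable_fun setT (fun w => (a * \1_B w)%:E).
  apply/(measurable_EFinP setT (fun w => a * \1_B w)).
  by apply: measurable_funM => //; apply: measurable_indic.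
have mH2 : measurable_fun setT (fun w => \sum_(i < N) ((t / 2)%:E * sr i w))%E.
  apply: emeasurable_sum => i.
  by apply: emeasurable_funM => //; exact: measurable_cst.
have mH : measurable_fun setT H by apply: emeasurable_funD.
apply: (@le_trans _ _ (\int[P]_w H w)%E).
  apply: le_int_nm; [exact: funeneg_ge0 | exact: H0 | exact: mH |].
  apply: filterS hPhi => w [cs [hcs hphi]].
  rewrite funenegE indicE; case: (boolP (w \in B)) => wB; last first.
    by rewrite mulr0 oppe0 maxxx.
  rewrite mulr1 ge_max H0 andbT.
  have hs i : (((cs i ^ 2)%:R)%:E <= sr i w)%E.
    apply: le_trans (nneseries_lim_ge (cs i).+1 _); last by move=> *; exact: u0.
    rewrite big_nat_recr //=.
    have -> : u i (cs i) w = ((cs i ^ 2)%:R)%:E.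
      by rewrite /u indicE mem_set ?mulr1 //; exact: hcs.
    by apply: leeDr; apply: sume_ge0 => *; exact: u0.
  apply: (@le_trans _ _ ((a + \sum_(i < N) (t / 2 * (cs i ^ 2)%:R))%:E)); last first.
    rewrite /H indicE wB /= mulr1 EFinD leeD2l //.
    rewrite -sumEFin; apply: lee_sum => i _; rewrite EFinM.
    by apply: lee_wpmul2l => //; rewrite lee_fin divr_ge0 // ltW.
  rewrite lee_fin.
  have hc : \sum_(i < N) (cs i)%:R <= N%:R / (2 * t) + \sum_(i < N) (t / 2 * (cs i ^ 2)%:R).
    have -> : N%:R / (2 * t) = \sum_(i < N) (1 / (2 * t)).
      by rewrite big_const_ord iter_addr addr0 -[RHS]mulr_natr mulrC div1r.
    rewrite -big_split /=; apply: ler_sum => i _.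
    rewrite -subr_ge0 natrX.
    have -> : 1 / (2 * t) + t / 2 * (cs i)%:R ^+ 2 - (cs i)%:R =
              (t * (cs i)%:R - 1) ^+ 2 / (2 * t).
      by field; rewrite gt_eqF.
    by rewrite divr_ge0 ?sqr_ge0 // mulr_ge0 // ltW.
  rewrite /a; lra.
rewrite /H ge0_integralD //; first last.
- by move=> w _; apply: sume_ge0 => i _; rewrite mule_ge0 // lee_fin divr_ge0 // ltW.
- by move=> w _; rewrite lee_fin mulr_ge0.
have mI : measurable_fun setT (fun x => (\1_B x)%:E : \bar R).
  by apply/(measurable_EFinP setT (\1_B : Om -> R)); exact: measurable_indic.
have I1 : (\int[P]_x (a * \1_B x)%:E = a%:E * P B)%E.
  under eq_integral do rewrite EFinM.
  rewrite ge0_integralZl_EFin //.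
  by rewrite integral_indic // setIT.
have I2 : (\int[P]_x (\sum_(i < N) ((t / 2)%:E * sr i x)%E) =
    \sum_(i < N) ((t / 2)%:E *
      \sum_(0 <= c <oo) (((c ^ 2)%:R * Defs.poisson_pmf (area r0) c)%:E)))%E.
  rewrite ge0_integral_sum //; first last.
  - by move=> i x _; rewrite mule_ge0 // lee_fin divr_ge0 // ltW.
  - by move=> i; apply: emeasurable_funM => //; exact: measurable_cst.
  apply: eq_bigr => i _.
  rewrite ge0_integralZl_EFin //; last by rewrite divr_ge0 // ltW.
  congr (_ * _)%E.
  rewrite integral_nneseries //.
  apply: eq_eseriesr => c _.
  rewrite /u; under eq_integral do rewrite EFinM.
  rewrite ge0_integralZl_EFin //; last first.
    apply/(measurable_EFinP setT (\1_(E i c) : Om -> R)).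
    by apply: measurable_indic; exact: mE.
  rewrite integral_indic ?setIT //; last exact: mE.
  rewrite /E EFinM; congr (_ * _)%E; exact: (cev_prob hM).
rewrite I1 I2.
apply: (@le_trans _ _ ((a * eps)%:E + \sum_(i < N) ((t / 2) * K)%:E)%E).
  apply: leeD; first by rewrite EFinM; apply: lee_wpmul2l; rewrite ?lee_fin.
  apply: lee_sum => i _; rewrite [X in (_ <= X)%E]EFinM.
  by apply: lee_wpmul2l => //; rewrite lee_fin divr_ge0 // ltW.
rewrite sumEFin -EFinD lee_fin.
rewrite big_const_ord iter_addr addr0 -[_ *+ N]mulr_natl.
have -> : a * eps + N%:R * (t / 2 * K) = 2 * S * eps + N%:R * (1 + K) / 2 * t.
  by rewrite -tt /a; field; rewrite gt_eqF.
by [].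
Qed.

End IB.

Lemma sq_le_pow4 (c : nat) : (c ^ 2 <= 4 ^ c)%N.
Proof.
have h := ltn_expl c (isT : (1 < 2)%N).
rewrite (_ : 4 = 2 ^ 2)%N // -expnM mulnC expnM.
by rewrite leq_exp2r // ltnW.
Qed.

Lemma pmf_moment (R : realType) (l : R) : 0 <= l ->
  (\sum_(0 <= n <oo) (((n ^ 2)%:R * Defs.poisson_pmf l n)%:E)
     <= (expR (4 * l))%:E)%E.
Proof.
move=> l0; rewrite -exp_series; last by lra.
apply: lee_nneseries.
  move=> i _ _; rewrite lee_fin mulr_ge0 //.
  by rewrite /Defs.poisson_pmf mulr_ge0 // ?mulr_ge0 ?expR_ge0 ?exprn_ge0.
move=> n _; rewrite lee_fin /Defs.poisson_pmf.
have ha : 0 <= l ^+ n / n`!%:R by rewrite divr_ge0 // exprn_ge0.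
have he : expR (- l) <= 1 by rewrite expR_le1; lra.
have he0 : 0 <= expR (- l) by rewrite expR_ge0.
have hc : (n ^ 2)%:R <= 4 ^+ n :> R by rewrite -natrX ler_nat sq_le_pow4.
have hc0 : 0 <= (n ^ 2)%:R :> R by [].
rewrite -mulrA exprMn -mulrA.
move: ha he he0 hc hc0; set a := l ^+ n / _; set e := expR _; set c := _%:R; set F := _ ^+ n.
move=> ha he he0 hc hc0; rewrite mulrA; apply: le_trans (_ : c * a <= _); last by rewrite ler_wpM2r.
by rewrite ler_wpM2r // ler_piMr.
Qed.


Section Det.
Variable R : realType.

Lemma exmin N (y : 'I_N -> R) : (0 < N)%N -> exists i0, forall i, y i0 <= y i.
Proof.
move=> N0; pose i00 := Ordinal N0.
case: (@arg_minP _ _ _ i00 xpredT y isT) => i0 _ H.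
by exists i0 => i; apply: H.
Qed.

Lemma disp_lb N (X : R -> 'I_N -> R) (V : R) : (0 < N)%N ->
  (forall t, 0 <= t <= 1 -> forall i, - V <= X t i - X 0 i) -> - V <= min_disp X.
Proof.
move=> N0 H; pose i00 := Ordinal N0.
apply: lb_le_inf.
  exists (inf [set X 0 i - X 0 i | i in [set: 'I_N]]); exists 0 => //.
  by rewrite /= lexx ler01.
move=> _ [t t01 <-]; apply: lb_le_inf.
  by exists (X t i00 - X 0 i00); exists i00.
by move=> _ [i _ <-]; apply: H.
Qed.

Lemma kc_lb N (X : R -> 'I_N -> R) (V : R) : (0 < N)%N ->
  (forall t, 0 <= t <= 1 -> - V <= kc_cfg (X t) - kc_cfg (X 0)) -> - V <= min_kc X.
Proof.
move=> N0 H; apply: lb_le_inf.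
  exists (kc_cfg (X 0) - kc_cfg (X 0)); exists 0 => //.
  by rewrite /= lexx ler01.
by move=> _ [t t01 <-]; apply: H.
Qed.

Lemma kc_set_ub N (y : 'I_N -> R) k :
  (ln (N%:R : R)) ^+ 2 < #|[set i | k <= y i]|%:R -> exists i, k <= y i.
Proof.
move=> h; have : (0 < #|[set i | (k <= y i)%R]|)%N.
  rewrite lt0n; apply/negP => /eqP h0; move: h; rewrite h0.
  by have := sqr_ge0 (ln (N%:R : R)); lra.
by case/card_gt0P => i; rewrite inE => hi; exists i.
Qed.

Lemma kc_mem N (y : 'I_N -> R) i0 : (forall i, y i0 <= y i) ->
  (ln (N%:R : R)) ^+ 2 < N%:R ->
  [set k : R | (exists i (z : int), k = y i + z%:~R) /\
               (ln (N%:R : R)) ^+ 2 < #|[set i | k <= y i]|%:R] (y i0).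
Proof.
move=> hmin hN; split; first by exists i0, 0; rewrite addr0.
rewrite (_ : #|_| = N) //; rewrite -[RHS]card_ord; apply: eq_card => i.
by rewrite [RHS]inE mem_set /=.
Qed.

Lemma kc_ge N (y : 'I_N -> R) m : (0 < N)%N -> (ln (N%:R : R)) ^+ 2 < N%:R ->
  (forall i, m <= y i) -> m <= kc_cfg y.
Proof.
move=> N0 hN hm; have [i0 hi0] := exmin y N0.
apply: le_trans (hm i0) _; apply: ub_le_sup; last exact: kc_mem.
exists (\sum_i `|y i|) => k [_ /kc_set_ub [i hi]].
apply: le_trans hi _; apply: le_trans (ler_norm _) _.
by rewrite (bigD1 i) //= lerDl sumr_ge0.
Qed.

Lemma kc_le N (y : 'I_N -> R) M : (0 < N)%N -> (ln (N%:R : R)) ^+ 2 < N%:R ->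
  (forall i, y i <= M) -> kc_cfg y <= M.
Proof.
move=> N0 hN hM; have [i0 hi0] := exmin y N0.
apply: ge_sup; first by exists (y i0); exact: kc_mem.
by move=> k [_ /kc_set_ub [i hi]]; apply: le_trans hi (hM i).
Qed.

End Det.

Lemma lnsq_lt (R : realType) (N : nat) : (64 <= N)%N -> (ln (N%:R : R)) ^+ 2 < N%:R.
Proof.
move=> N64; have N0 : 0 <= N%:R :> R by [].
have N64r : 64 <= N%:R :> R by rewrite ler_nat.
set y := Num.sqrt (N%:R : R).
have yy : y ^+ 2 = N%:R by rewrite sqr_sqrtr.
have y0 : 0 <= y by rewrite sqrtr_ge0.
have y8 : 8 <= y by nra.
have e : 1 + y ^+ 3 / 3`!%:R <= expR y by exact: expR_ge1Dxn.
have f3 : 3`!%:R = 6 :> R by [].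
rewrite f3 in e.
have hlt : N%:R < expR y by nra.
have hl : ln (N%:R : R) < y.
  rewrite -[X in _ < X]expRK ltr_ln // posrE ?expR_gt0 //; lra.
have hl0 : 0 <= ln (N%:R : R) by apply: ln_ge0; lra.
nra.
Qed.

Lemma dev_le (R : realType) N (x : 'I_N -> R) m i :
  `|x i - m| <= Num.sqrt (\sum_(j < N) (x j - m) ^+ 2).
Proof.
rewrite -sqrtr_sqr ler_sqrt ?sumr_ge0 // => [|j _]; last exact: sqr_ge0.
by rewrite (bigD1 i) //= lerDl sumr_ge0 // => j _; exact: sqr_ge0.
Qed.

Lemma count_fin (R : realType) (S A : set (R * R)) (c : nat) :
  count_in S A = (c%:R)%:E -> finite_set (S `&` A) /\ #|` fset_set (S `&` A)| = c.
Proof.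
rewrite /count_in /counting; case: asboolP => // fin [] /eqP.
by rewrite eqr_nat => /eqP.
Qed.

Section Glue.
Variables (R : realType) (d : measure_display) (Om : measurableType d)
  (P : probability Om R) (N : nat) (M : noise N -> Om -> set (R * R)).
Hypothesis hM : indep_std_poisson P M.

Lemma good_ae (mu q sv : R) (x : 'I_N -> R) (X : Om -> R -> 'I_N -> R) :
  0 < mu -> 0 <= q <= 1 -> (0 < N)%N -> (ln (N%:R : R)) ^+ 2 < N%:R ->
  {ae P, forall w, moran_path mu q sv (fun k => M k w) x (X w)} ->
  {ae P, forall w, exists cs : 'I_N -> nat,
     (forall i, count_in (M (NDown i) w) (rect_of (0, 2, 0, mu + 1)) = ((cs i)%:R)%:E) /\
     (- (2 * Num.sqrt (\sum_(j < N) (x j - mean_cfg x) ^+ 2) + \sum_(i < N) (cs i)%:R)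
        <= min_disp (X w) /\
      - (2 * Num.sqrt (\sum_(j < N) (x j - mean_cfg x) ^+ 2) + \sum_(i < N) (cs i)%:R)
        <= min_kc (X w))}.
Proof.
move=> mu0 q01 N0 hN hX.
set r0 : R * R * R * R := (0, 2, 0, mu + 1).
have gr0 : good_rect r0 by rewrite /good_rect /= lexx ler0n /=; split => //; lra.
set m := mean_cfg x; set S := Num.sqrt _.
pose Q (n : nat) (w : Om) := forall h : (n < N)%N,
    exists c : nat, count_in (M (NDown (Ordinal h)) w) (rect_of r0) = (c%:R)%:E.
have hall : {ae P, forall w, forall n, Q n w}.
  apply: ae_foralln => n.
  have [nN|nN] := ltnP n N.
    apply: filterS (fin_ae hM (NDown (Ordinal nN)) gr0) => w hw h.
    by rewrite (_ : Ordinal h = Ordinal nN) //; apply: val_inj.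
  by apply: aeW => w h; exfalso; move: h; rewrite ltnNge nN.
apply: filterS2 hX hall => w hp hc.
have hc' : forall i : 'I_N, exists c : nat,
    count_in (M (NDown i) w) (rect_of r0) = (c%:R)%:E.
  move=> i; have := hc i (ltn_ord i).
  by rewrite (_ : Ordinal (ltn_ord i) = i) //; apply: val_inj.
have [cs hcs] := choice hc'.
exists cs; split => //.
have X0 : X w 0 = x by case: hp.
pose L i := (fset_set (M (NDown i) w `&` rect_of r0) : seq (R * R)).
have hfin i := count_fin (hcs i).
have Lin : forall i t u, 0 < t <= 1 -> (fun k => M k w) (NDown i) (t, u) ->
    u <= (1 - q) * mu -> (t, u) \in L i.
  move=> i t u /andP[t0 t1] /= hm hu.
  have := in_fset_set (hfin i).1 (t, u); rewrite /L => ->.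
  apply: mem_set; split => //.
  case: hM => hq _ _; have [_ u0] := hq _ _ _ hm.
  rewrite /rect_of /rect /=; split; apply/andP; split => //; try lra.
  have : q * mu >= 0 by rewrite mulr_ge0 //; [case/andP: q01| lra].
  nra.
have Fb : forall t, (Fn L t <= \sum_(i < N) cs i)%N.
  move=> t; apply: leq_sum => i _.
  apply: leq_trans (count_size _ _) _.
  by rewrite -(hfin i).2.
have xb i : m - S <= x i <= m + S.
  have := dev_le x m i; rewrite -/S ler_norml => /andP[h1 h2].
  by apply/andP; split; lra.
set D := \sum_(i < N) (cs i)%:R.
have Xb t : 0 <= t <= 1 -> forall i, m - S - D <= X w t i.
  move=> t01 i.
  have := path_lb hp (m0 := m - S) (fun j => (andP (xb j)).1) Lin t01 i.
  have : (Fn L t)%:R <= D :> R by rewrite /D -natr_sum ler_nat Fb.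
  lra.
split.
  apply: disp_lb => // t t01 i; rewrite X0.
  have := Xb t t01 i; have := xb i; lra.
apply: kc_lb => // t t01; rewrite X0.
have h1 := kc_ge N0 hN (Xb t t01).
have h2 : kc_cfg x <= m + S by apply: kc_le => // i; case/andP: (xb i).
lra.
Qed.

End Glue.

Unset Implicit Arguments. Set Strict Implicit.

Theorem lemma4p3 (R : realType) (mu : R) (mu_gt0 : 0 < mu) :
  exists C : R,
  forall (q s : R), 0 <= q <= 1 -> 0 < s ->
  forall (d : measure_display) (Om : nat -> measurableType d)
         (P : forall N : nat, probability (Om N) R)
         (M : forall N : nat, noise N -> Om N -> set (R * R)),
    (forall N, indep_std_poisson (P N) (M N)) ->
  forall (X Y : forall N : nat, ('I_N -> R) -> Om N -> R -> 'I_N -> R),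
    (forall N (x : 'I_N -> R), config_ok x ->
       {ae P N, forall w, moran_path mu q s (fun k => M N k w) x (X N x w)}) ->
    (forall N (x : 'I_N -> R), config_ok x ->
       {ae P N, forall w, moran_path mu q 0 (fun k => M N k w) x (Y N x w)}) ->
  forall (A : forall N : nat, set (R -> R))
         (B : forall N : nat, ('I_N -> R) -> set (Om N))
         (eps : nat -> R),
    eps n @[n --> \oo] --> 0 ->
    (forall N (x : 'I_N -> R), config_ok x -> F1 (M N) (B N x)) ->
    (forall N (x : 'I_N -> R), config_ok x -> A N (emp x) ->
       (P N (B N x) <= (eps N)%:E)%E) ->
  exists N0 : nat, forall N : nat, (N0 <= N)%N ->
  forall x : 'I_N -> R, config_ok x -> A N (emp x) ->
    let bound :=
      - C * (Num.sqrt (c2_cfg x * N%:R ^+ 3) + N%:R ^+ 2) * Num.sqrt (eps N) in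
    [/\ (bound%:E <= \int[P N]_w ((min_disp (X N x w) * \1_(B N x) w)%:E))%E,
        (bound%:E <= \int[P N]_w ((min_kc (X N x w) * \1_(B N x) w)%:E))%E,
        (bound%:E <= \int[P N]_w ((min_disp (Y N x w) * \1_(B N x) w)%:E))%E &
        (bound%:E <= \int[P N]_w ((min_kc (Y N x w) * \1_(B N x) w)%:E))%E].
Proof.
set r0 : R * R * R * R := (0, 2, 0, mu + 1).
have gr0 : good_rect r0 by rewrite /good_rect /= lexx ler0n /=; split => //; lra.
have ar0 : 0 <= area r0 by rewrite /area /= subr0 subr0 mulr_ge0 //; lra.
set K := expR (4 * area r0).
have K0 : 0 <= K by rewrite expR_ge0.
have hK := pmf_moment ar0; rewrite -/K in hK.
exists (2 + (1 + K) / 2).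
move=> q s q01 s0 d Om P M hM X Y hX hY A B eps heps hB hPB.
have [N1 _ hN1] : \forall n \near \oo, `|0 - eps n| < 1.
  exact: cvgr_dist_lt heps _ ltr01.
exists (maxn N1 64) => N hN x cx hA bound.
have N1N : (N1 <= N)%N by apply: leq_trans hN; exact: leq_maxl.
have N64 : (64 <= N)%N by apply: leq_trans hN; exact: leq_maxr.
have N0 : (0 < N)%N by apply: leq_trans N64.
have hln := lnsq_lt R N64.
have e1 : eps N <= 1.
  have := hN1 N N1N; rewrite sub0r normrN ltr_norml => /andP[_ h]; lra.
have mB : measurable (B N x).
  apply: (smallest_sub (sigma_algebra_measurable _) _ (hB N x cx)).
  move=> E [k [r [c [gr [_ ->]]]]].
  by case: (hM N) => _ h2 _; exact: h2.
have PB := hPB N x cx hA.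
have e0 : 0 <= eps N by rewrite -lee_fin; apply: le_trans PB; exact: measure_ge0.
set S := Num.sqrt (\sum_(j < N) (x j - mean_cfg x) ^+ 2).
have S0 : 0 <= S by rewrite sqrtr_ge0.
have ga := good_ae (hM N) mu_gt0 q01 N0 hln (hX N x cx).
have gy := good_ae (hM N) mu_gt0 q01 N0 hln (hY N x cx).
have key : forall Phi : Om N -> R,
  {ae P N, forall w, exists cs : 'I_N -> nat,
     (forall i, count_in (M N (NDown i) w) (rect_of r0) = ((cs i)%:R)%:E) /\
     - (2 * S + \sum_(i < N) (cs i)%:R) <= Phi w} ->
  (bound%:E <= \int[P N]_w ((Phi w * \1_(B N x) w)%:E))%E.
  move=> Phi h; apply: le_trans (int_bound (hM N) gr0 hK S0 mB PB h).
  rewrite lee_fin /bound.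
  set a := Num.sqrt (eps N).
  have a0 : 0 <= a by rewrite sqrtr_ge0.
  have aa : a * a = eps N by rewrite -expr2 sqr_sqrtr.
  have a1 : a <= 1 by nra.
  have Nr : 1 <= N%:R :> R by rewrite ler1n.
  have hc : Num.sqrt (c2_cfg x * N%:R ^+ 3) = S * N%:R.
    have -> : c2_cfg x * N%:R ^+ 3 = (\sum_(j < N) (x j - mean_cfg x) ^+ 2) * N%:R ^+ 2.
      rewrite /c2_cfg; field; rewrite pnatr_eq0 -lt0n //.
    by rewrite sqrtrM ?sqrtr_sqr ?ger0_norm // sumr_ge0 // => j _; exact: sqr_ge0.
  rewrite hc -aa.
  set k := (1 + K) / 2.
  have k0 : 0 <= k by rewrite /k divr_ge0 //; lra.
  set n := N%:R : R.
  have h1 : S * (a * a) <= S * (n * a).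
    by apply: ler_wpM2l => //; nra.
  have h2 : k * (n * a) <= k * (n * n * a).
    apply: ler_wpM2l => //; rewrite -[X in X <= _]mul1r -mulrA; apply: ler_wpM2r => //; rewrite mulr_ge0 //; lra.
  have h3 : 0 <= n * n * a by nra.
  have h4 : 0 <= k * (S * (n * a)) by rewrite mulr_ge0 // mulr_ge0 // mulr_ge0 //; lra.
  have -> : N%:R * (1 + K) / 2 * a = k * (n * a) by rewrite /k /n; field.
  have -> : - (2 + k) * (S * n + n ^+ 2) * a =
    - (2 * (S * (n * a)) + 2 * (n * n * a) + k * (S * (n * a)) + k * (n * n * a)).
    by ring.
  lra.
split; apply: key.
- by apply: filterS ga => w [cs [h1 [h2 h3]]]; exists cs.
- by apply: filterS ga => w [cs [h1 [h2 h3]]]; exists cs.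
- by apply: filterS gy => w [cs [h1 [h2 h3]]]; exists cs.
- by apply: filterS gy => w [cs [h1 [h2 h3]]]; exists cs.
Qed.
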